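(* For every rational number $s>1$ we have $g(s)\le \frac{s+1}{2s}$. Moreover, there is no positive integer $t$ (with $st$ an integer) such that $g(s,t)=\frac{s+1}{2s}$.
   Context: Let $\mathbb{F}$ be a finite field and $x_1,\dots,x_p$ a basis of $\mathbb{F}^p$. A $[t\times m,p]$ array code is a $t\times m$ array whose entries (cells) are linear combinations of $x_1,\dots,x_p$; its columns are called servers. It has the $k$-PIR property (is a $[t\times m,p]$ $k$-PIR array code) if for every $i\in\{1,\dots,p\}$ there exist $k$ pairwise disjoint sets $S_1,\dots,S_k$ of columns such that for every $j$ the vector $x_i$ lies in the linear span of all entries of the columns in $S_j$. Its PIR rate is $k/m$. For a rational $s>1$ and a positive integer $t$ with $st$ an integer, $g(s,t)$ is the largest PIR rate $k/m$ of a $[t\times m,st]$ $k$-PIR array code (over all finite fields, all $m$ and all $k$), and $g(s)=\limsup_{t\to\infty} g(s,t)$, with $t$ ranging over positive integers such that $st$ is an integer. *)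

(* Defs.v *)
From HB Require Import structures.
From mathcomp Require Import all_boot all_order all_algebra.
From mathcomp Require Import all_classical all_reals.
From mathcomp Require Import topology normedtype sequences.
Set Implicit Arguments. Unset Strict Implicit. Unset Printing Implicit Defensive.
Import Order.TTheory GRing.Theory Num.Theory.
Local Open Scope ring_scope.

(* A [t x m, p] array code over F: cell (a, j) (row a, column/server j) is a
   linear combination of x_1..x_p, i.e. its coefficient vector in F^p.
   The basis vector x_i is the unit row vector delta_mx 0 i. *)
Definition array_code (F : finFieldType) (t m p : nat) :=
  'I_t -> 'I_m -> 'rV[F]_p.

Definition col_entries (F : finFieldType) (t m p : nat)
  (C : array_code F t m p) (S : {set 'I_m}) : seq 'rV[F]_p :=
  [seq C a j | a <- enum 'I_t, j <- enum S].

Definition is_kPIR (F : finFieldType) (t m p k : nat) (C : array_code F t m p) :=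
  forall i : 'I_p, exists S : 'I_k -> {set 'I_m},
    (forall j1 j2, j1 != j2 -> [disjoint S j1 & S j2]) /\
    (forall j, (delta_mx 0 i : 'rV[F]_p) \in <<col_entries C (S j)>>%VS).

Definition PIR_rates (R : realType) (s : rat) (t : nat) : set R :=
  [set r | exists (F : finFieldType) (p m k : nat) (C : array_code F t m p),
      [/\ p%:Q = s * t%:Q, (0 < m)%N, (0 < k)%N, @is_kPIR F t m p k C
        & r = k%:R / m%:R]].

Definition g (R : realType) (s : rat) (t : nat) : R := sup (@PIR_rates R s t).

(* g(s) = limsup over positive t with st integer; these t are exactly the
   positive multiples of the denominator of s, enumerated as denq s * (n+1). *)
Definition g_lim (R : realType) (s : rat) : \bar R :=
  limn_esup (fun n : nat => ((@g R s (`|denq s|%N * n.+1)%N)%:E)).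
Arguments g R s t : clear implicits.
Arguments g_lim R s : clear implicits.

(* Main.v *)
Require Import Defs.
From HB Require Import structures.
From mathcomp Require Import all_boot all_order all_algebra.
From mathcomp Require Import all_classical all_reals.
From mathcomp Require Import topology normedtype sequences.
From mathcomp Require Import zify ring lra.
Set Implicit Arguments. Unset Strict Implicit. Unset Printing Implicit Defensive.
Import Order.TTheory GRing.Theory Num.Theory.
Local Open Scope ring_scope.

Lemma sumb_card (I : finType) (P : pred I) : (\sum_i (P i : nat) = #|P|)%N.
Proof. rewrite -sum1_card [RHS]big_mkcond /=; apply: eq_bigr => i _; by rewrite unfold_in; case: (P i). Qed.

Lemma disj_sum m k (S : 'I_k -> {set 'I_m}) (X : {set 'I_m}) :
  (forall j1 j2, j1 != j2 -> [disjoint S j1 & S j2]) ->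
  (\sum_j #|S j :&: X| <= #|X|)%N.
Proof.
move=> D.
have E j : #|S j :&: X| = (\sum_(x in X) (x \in S j))%N.
  rewrite -sum1_card big_mkcond /= [RHS]big_mkcond /=.
  by apply: eq_bigr => x _; rewrite inE; case: (x \in X); case: (x \in S j).
rewrite (eq_bigr _ (fun j _ => E j)) exchange_big /= -sum1_card.
apply: leq_sum => x xX; rewrite (@sumb_card _ (fun j => x \in S j)).
apply/card_le1P => j1; rewrite !unfold_in /= => h1 j2; rewrite !unfold_in /=.
apply/idP/eqP => [h2|->//].
apply/eqP/negP => /negP ne; have := D _ _ ne.
by move=> /disjointFr /(_ h2); rewrite [x \in _]h1.
Qed.

Lemma arith (k p m t Bt I : nat) : (t + 1 <= p)%N -> (Bt + I <= m * t)%N ->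
  (2 * k * p <= Bt + m * p)%N -> (6 * k * p <= 4 * Bt + 2 * m * p + 2 * p * I)%N ->
  (2 * k * p * (2 * p + 3) + m <= m * (p + t) * (2 * p + 3))%N.
Proof. move=> *. nia. Qed.

Lemma sum3 n (f : 'I_n -> nat) a b c :
  (\sum_(i < n) (a * f i + b + c) = a * \sum_(i < n) f i + b * n + c * n)%N.
Proof.
rewrite big_split /= big_split /= -big_distrr /= !sum_nat_const card_ord.
by rewrite (mulnC n b) (mulnC n c).
Qed.

Lemma sum2 n (f : 'I_n -> nat) b :
  (\sum_(i < n) (f i + b) = \sum_(i < n) f i + b * n)%N.
Proof. by rewrite big_split /= sum_nat_const card_ord mulnC. Qed.

Section LA.
Variables (F : finFieldType) (p : nat).
Definition ux (i : 'I_p) : 'rV[F]_p := delta_mx 0 i.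
Definition units (J : {set 'I_p}) := [seq ux i | i <- enum J].

Lemma ux_neq0 i : ux i != 0.
Proof.
apply/eqP => /matrixP /(_ 0 i); rewrite !mxE !eqxx /=. by move/eqP; rewrite oner_eq0.
Qed.

Lemma units_span J i : ux i \in <<units J>>%VS -> i \in J.
Proof.
move=> H; apply/negPn/negP => niJ.
set X := in_tuple (units J).
have := @coord_span _ _ _ X _ H.
move/matrixP => /(_ 0 i).
rewrite summxE !mxE !eqxx /=.
rewrite big1.
  by move/eqP; rewrite oner_eq0.
move=> l _; rewrite !mxE.
have : X`_l \in units J by apply: mem_nth; exact: ltn_ord.
case/mapP => j jJ ->; rewrite !mxE /=.
have -> : (i == j) = false by apply/negbTE; apply: contra niJ => /eqP ->; rewrite -mem_enum.
by rewrite mulr0.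
Qed.

Lemma units_free J : free (units J).
Proof.
apply/freeP => c Hc l.
have E (i : 'I_#|J|) : (map_tuple [eta ux] (enum_tuple J))`_i = ux (enum_val i).
  rewrite /= (nth_map (enum_val i)); last by apply: (leq_trans (ltn_ord i)); rewrite cardE.
  congr ux; rewrite /enum_val; apply: set_nth_default.
  by apply: (leq_trans (ltn_ord i)); rewrite cardE.
have := congr1 (fun M : 'rV[F]_p => M 0 (enum_val l)) Hc.
rewrite /= summxE (bigD1 l) //= big1 ?addr0.
  by rewrite !mxE E !mxE !eqxx mulr1.
move=> j jl; rewrite !mxE E !mxE /=.
have -> : (enum_val l == enum_val j) = false.
  by apply/negbTE; apply: contra jl => /eqP /enum_val_inj ->.
by rewrite mulr0.
Qed.
End LA.
Arguments ux {F p} i.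
Arguments units {F p} J.
Arguments units_span {F p J i}.
Arguments units_free {F p} J.

Section Code.
Variables (F : finFieldType) (t m p : nat) (C : array_code F t m p).

Definition Vc (a : 'I_m) := <<col_entries C [set a]>>%VS.
Definition Bs (a : 'I_m) := [set i | ux i \in Vc a].

Lemma col_entriesP (S : {set 'I_m}) y :
  reflect (exists r j, j \in S /\ y = C r j) (y \in col_entries C S).
Proof.
apply: (iffP allpairsP) => [[[r j] /= [_ jS ->]]|[r [j [jS ->]]]].
  by exists r, j; rewrite -mem_enum.
by exists (r, j); rewrite /= mem_enum mem_enum.
Qed.

Lemma Cin a r : C r a \in Vc a.
Proof. by apply: memv_span; apply/col_entriesP; exists r, a; rewrite set11. Qed.

Lemma units_sub a : (<<units (Bs a)>> <= Vc a)%VS.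
Proof. by apply/span_subvP => y /mapP[i]; rewrite mem_enum inE => H ->. Qed.

Lemma dim_units (J : {set 'I_p}) : \dim (<<units J>> : {vspace 'rV[F]_p})%VS = #|J|.
Proof. by rewrite (eqP (units_free J)) size_map cardE. Qed.

Lemma dim_Vc a : (\dim (Vc a) <= t)%N.
Proof.
apply: (leq_trans (dim_span _)).
by rewrite /col_entries size_allpairs size_enum_ord -cardE cards1 muln1.
Qed.

Lemma card_Bs a : (#|Bs a| <= t)%N.
Proof. by rewrite -dim_units; apply: leq_trans (dimvS (units_sub a)) (dim_Vc a). Qed.

Lemma pure_sub a : #|Bs a| = t -> (Vc a <= <<units (Bs a)>>)%VS.
Proof.
move=> Ht; have /eqP <- : <<units (Bs a)>>%VS == Vc a.
  by rewrite eqEdim units_sub dim_units Ht dim_Vc.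
exact: subvv.
Qed.

Lemma pure_set (T : {set 'I_m}) i :
  {in T, forall a, #|Bs a| = t} -> ux i \in <<col_entries C T>>%VS ->
  exists2 a, a \in T & i \in Bs a.
Proof.
move=> HT Hi.
have sub : (<<col_entries C T>> <= <<units (\bigcup_(a in T) Bs a)>>)%VS.
  apply/span_subvP => y /col_entriesP [r [a [aT ->]]].
  have : (Vc a <= <<units (\bigcup_(a in T) Bs a)>>)%VS.
    apply: subv_trans (pure_sub (HT a aT)) _; apply/span_subvP => z /mapP [j]; rewrite mem_enum => jB ->.
    by apply: memv_span; apply/mapP; exists j => //; rewrite mem_enum; apply/bigcupP; exists a.
  by move/subvP; apply; apply: Cin.
have := units_span (subvP sub _ Hi).
by case/bigcupP => a aT iB; exists a.
Qed.

Lemma span0_false (S : {set 'I_m}) i : ux i \in <<col_entries C S>>%VS -> (0 < #|S|)%N.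
Proof.
rewrite card_gt0; apply: contraTneq => ->.
rewrite /col_entries enum_set0.
have -> : [seq C a j | a <- enum 'I_t, j <- [::]] = [::] by elim: (enum _).
by rewrite span_nil memv0 ux_neq0.
Qed.

Definition Bi i := [set a | i \in Bs a].
Definition Imp := [set a | #|Bs a| != t].

Lemma per_set (S : {set 'I_m}) i : ux i \in <<col_entries C S>>%VS ->
  (2 <= 2 * #|S :&: Bi i| + #|S :&: ~: Bi i|)%N /\
  (6 <= 6 * #|S :&: Bi i| + 2 * #|S :&: ~: Bi i| + 2 * #|S :&: Imp|)%N.
Proof.
move=> Hi.
case u: #|S :&: Bi i| => [|u']; last by lia.
have uF a : a \in S -> i \in Bs a -> False.
  move=> aS iB; suff : (0 < #|S :&: Bi i|)%N by rewrite u.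
  by apply/card_gt0P; exists a; rewrite finset.in_setI aS /= /Bi finset.in_set.
have Ev : #|S :&: ~: Bi i| = #|S|.
  by have := cardsID (Bi i) S; rewrite u finset.setDE.
have S2 : (2 <= #|S|)%N.
  have := span0_false Hi; case E1: #|S| => [|[|n]] //= _.
  have /cards1P [a Sa] : #|S| == 1%N by rewrite E1.
  rewrite Sa in Hi; exfalso; apply: (uF a); first by rewrite Sa set11.
  by rewrite inE.
have W : (0 < #|S :&: Imp|)%N.
  rewrite lt0n; apply/negP => /eqP /cards0_eq HS.
  have HT : {in S, forall a, #|Bs a| = t}.
    move=> a aS; apply/eqP; apply/negPn/negP => nt.
    have : a \in S :&: Imp by rewrite !inE aS.
    by rewrite HS inE.
  by have [a aS iB] := pure_set HT Hi; apply: (uF a).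
lia.
Qed.

Lemma per_i k (S : 'I_k -> {set 'I_m}) i :
  (forall j1 j2, j1 != j2 -> [disjoint S j1 & S j2]) ->
  (forall j, ux i \in <<col_entries C (S j)>>%VS) ->
  (2 * k <= 2 * #|Bi i| + #|~: Bi i|)%N /\
  (6 * k <= 6 * #|Bi i| + 2 * #|~: Bi i| + 2 * #|Imp|)%N.
Proof.
move=> D H.
have k2 : (2 * k = \sum_(j < k) 2)%N by rewrite sum_nat_const card_ord mulnC.
have k6 : (6 * k = \sum_(j < k) 6)%N by rewrite sum_nat_const card_ord mulnC.
have dB := disj_sum (Bi i) D; have dN := disj_sum (~: Bi i) D.
have dI := disj_sum Imp D.
have L1 : (\sum_(j < k) 2 <= \sum_(j < k) (2 * #|S j :&: Bi i| + #|S j :&: ~: Bi i|))%N.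
  by apply: leq_sum => j _; exact: (per_set (H j)).1.
have L2 : (\sum_(j < k) 6 <= \sum_(j < k) (6 * #|S j :&: Bi i| + 2 * #|S j :&: ~: Bi i| + 2 * #|S j :&: Imp|))%N.
  by apply: leq_sum => j _; exact: (per_set (H j)).2.
rewrite big_split /= -big_distrr /= sum_nat_const card_ord in L1.
rewrite !big_split /= !sum_nat_const card_ord in L2.
set sa := (\sum_(j < k) #|S j :&: Bi i|)%N in dB L1 L2.
set sb := (\sum_(j < k) #|S j :&: ~: Bi i|)%N in dN L1 L2.
set sc := (\sum_(j < k) #|S j :&: Imp|)%N in dI L2.
clearbody sa sb sc. move: dB dN dI L1 L2; move: #|Bi i| #|~: Bi i| #|Imp| => nB nN nI. lia.
Qed.

Lemma code_bound k : @is_kPIR F t m p k C -> (t + 1 <= p)%N ->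
  (2 * k * p * (2 * p + 3) + m <= m * (p + t) * (2 * p + 3))%N.
Proof.
move=> HK tp.
have Hc i : (#|Bi i| + #|~: Bi i| = m)%N by rewrite cardsC card_ord.
have Ai i : (2 * k <= #|Bi i| + m)%N /\ (6 * k <= 4 * #|Bi i| + 2 * m + 2 * #|Imp|)%N.
  have [S [D H]] := HK i; have [h1 h2] := per_i D H; have := Hc i; lia.
have A1 : (\sum_(i < p) (2 * k) <= \sum_(i < p) (#|Bi i| + m))%N.
  by apply: leq_sum => i _; exact: (Ai i).1.
have A2 : (\sum_(i < p) (6 * k) <= \sum_(i < p) (4 * #|Bi i| + 2 * m + 2 * #|Imp|))%N.
  by apply: leq_sum => i _; exact: (Ai i).2.
rewrite sum2 sum_nat_const card_ord in A1.
rewrite sum3 sum_nat_const card_ord in A2.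
have EB : (\sum_(i < p) #|Bi i| = \sum_(a < m) #|Bs a|)%N.
  have E1 i : #|Bi i| = (\sum_(a < m) (i \in Bs a))%N.
    by rewrite (@sumb_card _ (fun a => i \in Bs a)); apply: eq_card => a; rewrite /Bi finset.in_set unfold_in.
  rewrite (eq_bigr _ (fun i _ => E1 i)) exchange_big /=.
  by apply: eq_bigr => a _; rewrite -(@sumb_card _ (fun i => i \in Bs a)).
have BI : (\sum_(a < m) #|Bs a| + #|Imp| <= m * t)%N.
  rewrite -(@sumb_card _ (fun a => a \in Imp)) -big_split /=.
  have -> : (m * t = \sum_(a < m) t)%N by rewrite sum_nat_const card_ord.
  apply: leq_sum => a _; have := card_Bs a; rewrite !inE.
  by case: eqP => /= [->|ne] h; lia.
rewrite EB in A2 A1.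
move: A1 A2 BI; move: (\sum_(a < m) #|Bs a|)%N #|Imp| => Bt I.
move=> A1 A2 BI; apply: (arith (Bt := Bt) (I := I)) => //; lia.
Qed.
End Code.

Local Open Scope classical_set_scope.

Lemma limn_esup_le (R : realType) (u : (\bar R)^nat) (l : \bar R) :
  (forall n, u n <= l)%E -> (limn_esup u <= l)%E.
Proof.
move=> H; rewrite /limn_esup limf_esupE.
apply: (@le_trans _ _ (ereal.ereal_sup (u @` setT))).
  apply: ereal.ereal_inf_lbound; exists setT => //; exact: filterT.
by apply: ereal.ge_ereal_sup => _ [n _ <-]; exact: H.
Qed.
Lemma real_step (R : realType) (s : R) (P T K M : R) :
  0 < T -> 0 < M -> 1 <= P -> P = s * T ->
  2 * K * P * (2 * P + 3) + M <= M * (P + T) * (2 * P + 3) ->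
  K / M <= (s + 1) / (2 * s) - (2 * P * (2 * P + 3))^-1.
Proof.
move=> T0 M0 P1 Ps H.
have P0 : 0 < P by lra.
have s0 : s != 0 by apply/eqP => s0; rewrite s0 mul0r in Ps; lra.
have E : (s + 1) / (2 * s) - (2 * P * (2 * P + 3))^-1 - K / M =
   (M * (P + T) * (2 * P + 3) - (2 * K * P * (2 * P + 3) + M)) / (2 * P * (2 * P + 3) * M).
  rewrite Ps; field.
  by rewrite -Ps; apply/and4P; split => //; apply/negP => /eqP ?; lra.
rewrite -Num.Theory.subr_ge0 E; apply: divr_ge0; first lra.
apply: mulr_ge0; last lra.
apply: mulr_ge0; lra.
Qed.


Lemma rate_le (R : realType) (s : rat) (t : nat) (r : R) : 1 < s -> (0 < t)%N ->
  @PIR_rates R s t r ->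
  r <= ratr ((s + 1) / (2 * s)) - (2 * (ratr s * t%:R) * (2 * (ratr s * t%:R) + 3))^-1.
Proof.
move=> s1 t0 [F [p [m [k [C [Hp m0 k0 HK ->]]]]]].
have tp : (t < p)%N.
  have : t%:Q < p%:Q.
    rewrite Hp -{1}(mul1r t%:Q) ltr_pM2r //; by rewrite ltr0n.
  by rewrite ltr_nat.
have N := code_bound HK (eq_ind _ (fun x => is_true (x <= p)%N) tp _ (esym (addn1 t))).
have Pe : (p%:R : R) = ratr s * t%:R.
  have := congr1 (@ratr R) Hp; rewrite rmorphM /= !ratr_int -!pmulrn; exact: id.
rewrite -Pe fmorph_div rmorphD rmorph1 rmorphM /= ratr_nat.
apply: real_step Pe _.
- by rewrite ltr0n.
- by rewrite ltr0n.
- by rewrite ler1n; apply: leq_ltn_trans tp.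
have NR : ((2 * k * p * (2 * p + 3) + m)%N%:R <= (m * (p + t) * (2 * p + 3))%N%:R :> R).
  by rewrite ler_nat.
rewrite !natrD !natrM in NR; lra.
Qed.

Lemma g_le (R : realType) (s : rat) (t : nat) : 1 < s -> (0 < t)%N ->
  exists2 e : R, 0 < e & g R s t <= ratr ((s + 1) / (2 * s)) - e.
Proof.
move=> s1 t0.
set B : R := ratr ((s + 1) / (2 * s)).
set e0 : R := (2 * (ratr s * t%:R) * (2 * (ratr s * t%:R) + 3))^-1.
have B0 : 0 < B.
  rewrite /B ltr0q; apply: divr_gt0; lra.
have e00 : 0 < e0.
  have sp : 0 < (ratr s : R) by rewrite ltr0q; lra.
  have tp : 0 < (t%:R : R) by rewrite ltr0n.
  rewrite /e0 invr_gt0; apply: mulr_gt0; first by apply: mulr_gt0 => //; apply: mulr_gt0.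
  by apply: addr_gt0 => //; apply: mulr_gt0 => //; apply: mulr_gt0.
exists (Num.min e0 (B / 2)).
  by rewrite lt_min e00 /=; apply: divr_gt0.
have le1 : Num.min e0 (B / 2) <= e0 by rewrite ge_min lexx.
have le2 : Num.min e0 (B / 2) <= B / 2 by rewrite ge_min lexx orbT.
rewrite /g; have [[x Ax]|A0] := pselect (exists x, @PIR_rates R s t x).
  apply: ge_sup; first by exists x.
  move=> y Ay; have := rate_le s1 t0 Ay; rewrite -/B -/e0 => h; lra.
have -> : @PIR_rates R s t = set0.
  by apply/seteqP; split => y //= Ay; exfalso; apply: A0; exists y.
rewrite sup0; lra.
Qed.

Theorem theorem3 (R : realType) (s : rat) (hs : 1 < s) :
  (g_lim R s <= (ratr ((s + 1) / (2 * s)) : R)%:E)%E /\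
  (forall t : nat, (0 < t)%N -> (exists n : nat, s * t%:Q = n%:Q) ->
     g R s t != ratr ((s + 1) / (2 * s))).
Proof.
split.
  apply: limn_esup_le => n; rewrite lee_fin.
  have t0 : (0 < `|denq s|%N * n.+1)%N.
    by rewrite muln_gt0 andbT absz_gt0 denq_neq0.
  have [e e0 H] := g_le R hs t0.
  move: H; move: (g R s _) (ratr ((s + 1) / (2 * s)) : R) => a b H; lra.
move=> t t0 _; have [e e0 H] := g_le R hs t0.
apply/eqP => E; move: H; rewrite E.
move: (ratr ((s + 1) / (2 * s)) : R) => b H.
rewrite -Num.Theory.subr_ge0 addrAC subrr add0r oppr_ge0 in H.
by rewrite leNgt e0 in H.
Qed.
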